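(* For any number $c$ with $0<c<\min\{k_1|L_0|^2/2,\ k_2(\mu-|A_0|)^2/2\}$, the set of all critical points of $V$ in $V^{-1}([0,c])$ equals $V^{-1}(0)=\{(x,v)\in\mathbb R^3_0\times\mathbb R^3: L(x,v)=L_0,\ A(x,v)=A_0\}$.
   Context: $\mathbb R^3_0=\mathbb R^3\setminus\{0\}$, $\mu>0$. $L(x,v)=x\times v$ and $A(x,v)=v\times(x\times v)-\mu x/|x|$. Fix $L_0,A_0\in\mathbb R^3$ with $L_0\perp A_0$, $L_0\ne0$, $|A_0|<\mu$. With $k_1,k_2>0$, $V(x,v)=\tfrac{k_1}{2}|L(x,v)-L_0|^2+\tfrac{k_2}{2}|A(x,v)-A_0|^2$ on $\mathbb R^3_0\times\mathbb R^3$. *)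

(* Defs.v *)
From Stdlib Require Import Reals.
Open Scope R_scope.

Record vec3 := mkV { v1 : R ; v2 : R ; v3 : R }.

Definition vadd (a b : vec3) : vec3 := mkV (v1 a + v1 b) (v2 a + v2 b) (v3 a + v3 b).
Definition vsub (a b : vec3) : vec3 := mkV (v1 a - v1 b) (v2 a - v2 b) (v3 a - v3 b).
Definition vscale (k : R) (a : vec3) : vec3 := mkV (k * v1 a) (k * v2 a) (k * v3 a).
Definition vzero : vec3 := mkV 0 0 0.
Definition dot (a b : vec3) : R := v1 a * v1 b + v2 a * v2 b + v3 a * v3 b.
Definition vnorm (a : vec3) : R := sqrt (dot a a).
Definition cross (a b : vec3) : vec3 :=
  mkV (v2 a * v3 b - v3 a * v2 b)
      (v3 a * v1 b - v1 a * v3 b)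
      (v1 a * v2 b - v2 a * v1 b).

Definition Lmom (x v : vec3) : vec3 := cross x v.

Definition Alrl (mu : R) (x v : vec3) : vec3 :=
  vsub (cross v (cross x v)) (vscale (mu / vnorm x) x).

Definition Vfun (mu k1 k2 : R) (L0 A0 : vec3) (x v : vec3) : R :=
  k1 / 2 * (vnorm (vsub (Lmom x v) L0)) ^ 2
  + k2 / 2 * (vnorm (vsub (Alrl mu x v) A0)) ^ 2.

(* A function on R^3_0 x R^3 seen as a function of the 6 real coordinates
   (x1,x2,x3,v1,v2,v3). *)
Definition coords6 (F : vec3 -> vec3 -> R) (p : nat -> R) : R :=
  F (mkV (p 0%nat) (p 1%nat) (p 2%nat)) (mkV (p 3%nat) (p 4%nat) (p 5%nat)).

Definition pt6 (x v : vec3) (i : nat) : R :=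
  match i with
  | 0%nat => v1 x | 1%nat => v2 x | 2%nat => v3 x
  | 3%nat => v1 v | 4%nat => v2 v | _ => v3 v
  end.

Definition upd (p : nat -> R) (i : nat) (t : R) : nat -> R :=
  fun j => if Nat.eqb j i then t else p j.

Definition critical_point (F : vec3 -> vec3 -> R) (x v : vec3) : Prop :=
  forall i : nat, (i < 6)%nat ->
    derivable_pt_lim (fun t => coords6 F (upd (pt6 x v) i t)) (pt6 x v i) 0.

(* Main.v *)
Require Import Defs.
From Stdlib Require Import Reals Lra Lia.
From Coquelicot Require Import Coquelicot.
Open Scope R_scope.

Definition E1 (x v a b : vec3) : vec3 :=
  vadd (vadd (cross a x) (cross (cross x v) b))
       (vsub (vscale (dot b x) v) (vscale (dot x v) b)).
Definition E2 (x v a b : vec3) (m1 m3 : R) : vec3 :=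
  vadd (vadd (cross v a) (vscale (dot v v) b))
    (vadd (vscale (- dot b v) v) (vadd (vscale (- m1) b) (vscale (m3 * dot b x) x))).

Definition grad (mu k1 k2 : R) (L0 A0 x v dx dv : vec3) : R :=
  let r := vnorm x in
  let a := vscale k1 (vsub (Lmom x v) L0) in
  let b := vscale k2 (vsub (Alrl mu x v) A0) in
  dot (E2 x v a b (mu / r) (mu / (r*r*r))) dx + dot (E1 x v a b) dv.

Lemma dot_nonneg a : 0 <= dot a a.
Proof. destruct a; unfold dot; simpl; nra. Qed.

Lemma Vfun_alt mu k1 k2 L0 A0 x v : Vfun mu k1 k2 L0 A0 x v =
  k1/2 * dot (vsub (Lmom x v) L0) (vsub (Lmom x v) L0) +
  k2/2 * dot (vsub (Alrl mu x v) A0) (vsub (Alrl mu x v) A0).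
Proof. unfold Vfun, vnorm. rewrite !pow2_sqrt; auto using dot_nonneg. Qed.

Lemma derV mu k1 k2 L0 A0 (f : nat -> R -> R) (d : nat -> R) t x1 x2 x3 y1 y2 y3 :
  (forall j, is_derive (f j) t (d j)) ->
  f 0%nat t = x1 -> f 1%nat t = x2 -> f 2%nat t = x3 ->
  f 3%nat t = y1 -> f 4%nat t = y2 -> f 5%nat t = y3 ->
  0 < x1*x1+x2*x2+x3*x3 ->
  is_derive (fun s => Vfun mu k1 k2 L0 A0 (mkV (f 0%nat s) (f 1%nat s) (f 2%nat s))
                        (mkV (f 3%nat s) (f 4%nat s) (f 5%nat s))) t
   (grad mu k1 k2 L0 A0 (mkV x1 x2 x3) (mkV y1 y2 y3) (mkV (d 0%nat) (d 1%nat) (d 2%nat))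
      (mkV (d 3%nat) (d 4%nat) (d 5%nat))).
Proof.
  intros Hd H0 H1 H2 H3 H4 H5 Hpos.
  eapply is_derive_ext. { intro s. symmetry. apply Vfun_alt. }
  destruct L0 as [l1 l2 l3]; destruct A0 as [c1 c2 c3].
  unfold Lmom, Alrl, vnorm, dot, vsub, vscale, cross. simpl.
  assert (HD : forall j, Derive (fun s => f j s) t = d j).
  { intro j. exact (is_derive_unique _ _ _ (Hd j)). }
  assert (HE : forall j, ex_derive (fun s => f j s) t).
  { intro j. exists (d j). exact (Hd j). }
  auto_derive.
  { repeat split; auto; rewrite H0, H1, H2; try (apply Rgt_not_eq, sqrt_lt_R0); nra. }
  rewrite !HD, H0, H1, H2, H3, H4, H5.
  unfold grad, E1, E2, Lmom, Alrl, vnorm, dot, vsub, vscale, vadd, cross. simpl.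
  set (r := sqrt (x1*x1+x2*x2+x3*x3)).
  assert (Hr : 0 < r) by (apply sqrt_lt_R0; lra).
  assert (Hr2 : r * r = x1*x1+x2*x2+x3*x3) by (apply sqrt_sqrt; lra).
  field. lra.
Qed.

Ltac vdes := repeat match goal with v : vec3 |- _ => destruct v end.
Ltac vring := vdes; unfold E1, E2, dot, cross, vadd, vsub, vscale, vzero; simpl;
  try (f_equal; ring); try ring.

Lemma vzero_dot a : a <> vzero -> 0 < dot a a.
Proof. destruct a as [a1 a2 a3]; unfold dot, vzero; simpl; intro H.
  destruct (Req_dec a1 0); destruct (Req_dec a2 0); destruct (Req_dec a3 0);
  subst; try (exfalso; apply H; reflexivity); nra. Qed.

Lemma scale_zero_l k u : vscale k u = vzero -> u <> vzero -> k = 0.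
Proof. intros H Hu. apply vzero_dot in Hu.
  assert (k*k * dot u u = dot (vscale k u) (vscale k u)) by vring.
  rewrite H in H0. replace (dot vzero vzero) with 0 in H0 by (unfold dot, vzero; simpl; ring).
  assert (k * k * dot u u = 0) by (rewrite H0; ring).
  apply Rmult_integral in H1. destruct H1 as [H1|H1]; [|lra].
  apply Rmult_integral in H1; destruct H1; auto. Qed.

Lemma scale_zero_r k u : vscale k u = vzero -> k <> 0 -> u = vzero.
Proof. intros H Hk. destruct u as [u1 u2 u3]; unfold vscale, vzero in *.
  injection H; intros. f_equal; nra. Qed.

Lemma vsub_zero a b : vsub a b = vzero -> a = b.
Proof. destruct a, b; unfold vsub, vzero; intro H; injection H; intros; f_equal; lra. Qed.

Lemma scale_div s t b L : vscale s b = vscale t L -> s <> 0 -> b = vscale (t/s) L.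
Proof. intros H Hs. destruct b as [b1 b2 b3], L as [c1 c2 c3]; unfold vscale in *; simpl in *.
  injection H; intros h3 h2 h1.
  f_equal; [replace b1 with (s*b1/s) by (field; auto); rewrite h1
           |replace b2 with (s*b2/s) by (field; auto); rewrite h2
           |replace b3 with (s*b3/s) by (field; auto); rewrite h3]; field; auto. Qed.

Lemma id1 x d : vsub (vscale (dot x x) d) (vscale (dot x d) x) = cross x (cross d x).
Proof. vring. Qed.
Lemma id2 k x v : vscale k (cross x v) = cross (vscale k x) v.
Proof. vring. Qed.
Lemma id3 k d v : cross (vscale k d) v = vscale k (cross d v).
Proof. vring. Qed.

Lemma alg (x v a b : vec3) (m1 m3 : R) :
  m1 = m3 * dot x x -> m3 <> 0 -> x <> vzero -> cross x v <> vzero ->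
  E1 x v a b = vzero -> E2 x v a b m1 m3 = vzero ->
  exists l, b = vscale l (cross x v) /\
            a = vscale l (vsub (cross v (cross x v)) (vscale m1 x)).
Proof.
  intros Hm Hm3 Hx HL H1 H2. subst m1.
  pose proof (vzero_dot _ HL) as HLL.
  assert (HaL : dot a (cross x v) = 0).
  { replace (dot a (cross x v)) with (2 * dot x (E2 x v a b (m3 * dot x x) m3) - dot v (E1 x v a b)) by vring.
    rewrite H1, H2. unfold dot, vzero; simpl; ring. }
  assert (h2 : dot v v * dot b x - dot x v * dot b v = 0).
  { replace (dot v v * dot b x - dot x v * dot b v) with (dot x (E2 x v a b (m3 * dot x x) m3) - dot a (cross x v)) by vring.
    rewrite H2, HaL. unfold dot, vzero; simpl; ring. }
  assert (h3 : m3 * (dot x v * dot b x - dot x x * dot b v) = 0).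
  { replace (m3 * (dot x v * dot b x - dot x x * dot b v)) with (dot v (E2 x v a b (m3 * dot x x) m3)) by vring.
    rewrite H2. unfold dot, vzero; simpl; ring. }
  assert (h3' : dot x v * dot b x - dot x x * dot b v = 0).
  { apply Rmult_integral in h3; destruct h3; [contradiction|assumption]. }
  assert (Lag : dot (cross x v) (cross x v) = dot x x * dot v v - dot x v * dot x v) by vring.
  assert (hbx : dot b x = 0).
  { assert (H : (dot x x * dot v v - dot x v * dot x v) * dot b x = 0).
    { replace ((dot x x * dot v v - dot x v * dot x v) * dot b x) with
        (dot x x * (dot v v * dot b x - dot x v * dot b v) - dot x v * (dot x v * dot b x - dot x x * dot b v)) by ring.
      rewrite h2, h3'. ring. }
    rewrite <- Lag in H. apply Rmult_integral in H. destruct H; lra. }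
  assert (hbv : dot b v = 0).
  { assert (H : (dot x x * dot v v - dot x v * dot x v) * dot b v = 0).
    { replace ((dot x x * dot v v - dot x v * dot x v) * dot b v) with
        (dot x v * (dot v v * dot b x - dot x v * dot b v) - dot v v * (dot x v * dot b x - dot x x * dot b v)) by ring.
      rewrite h2, h3'. ring. }
    rewrite <- Lag in H. apply Rmult_integral in H. destruct H; lra. }
  set (L := cross x v) in *.
  set (l := dot L b / dot L L).
  assert (Hb : b = vscale l L).
  { assert (Hbl : cross b L = vsub (vscale (dot b v) x) (vscale (dot b x) v)) by (unfold L; vring).
    rewrite hbx, hbv in Hbl.
    assert (Hc : cross L (cross b L) = vsub (vscale (dot L L) b) (vscale (dot L b) L)) by vring.
    assert (Hz : cross b L = vzero) by (rewrite Hbl; vring).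
    rewrite Hz in Hc.
    assert (Hc2 : vsub (vscale (dot L L) b) (vscale (dot L b) L) = vzero) by (rewrite <- Hc; vring).
    apply vsub_zero in Hc2.
    unfold l. apply scale_div; [exact Hc2| lra]. }
  exists l. split; [exact Hb|].
  set (A := vsub (cross v L) (vscale (m3 * dot x x) x)).
  set (d := vsub a (vscale l A)).
  assert (Hdx : cross d x = vzero).
  { replace (cross d x) with (E1 x v a (vscale l L)) by (unfold d, A, L; vring).
    rewrite <- Hb. exact H1. }
  assert (Hdv : cross d v = vzero).
  { replace (cross d v) with (vscale (-1) (E2 x v a (vscale l L) (m3 * dot x x) m3)) by (unfold d, A, L; vring).
    rewrite <- Hb, H2. vring. }
  assert (K1 : vscale (dot x x) d = vscale (dot x d) x).
  { apply vsub_zero.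
    rewrite id1.
    rewrite Hdx. vring. }
  assert (K2 : vscale (dot x d) L = vzero).
  { unfold L; rewrite id2.
    rewrite <- K1, id3.
    rewrite Hdv. vring. }
  apply scale_zero_l in K2; [|exact HL].
  rewrite K2 in K1.
  assert (Hd : d = vzero).
  { apply scale_zero_r with (dot x x). rewrite K1. vring. apply vzero_dot in Hx. lra. }
  apply vsub_zero. exact Hd.
Qed.

Lemma upd_same p i j : upd p i (p i) j = p j.
Proof. unfold upd. destruct (Nat.eqb_spec j i); subst; reflexivity. Qed.

Lemma crit_deriv mu k1 k2 L0 A0 x1 x2 x3 y1 y2 y3 (i : nat) :
  0 < x1*x1+x2*x2+x3*x3 ->
  let p := pt6 (mkV x1 x2 x3) (mkV y1 y2 y3) in
  let d := fun j => if Nat.eqb j i then 1 else 0 in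
  derivable_pt_lim (fun t => coords6 (Vfun mu k1 k2 L0 A0) (upd p i t)) (p i)
    (grad mu k1 k2 L0 A0 (mkV x1 x2 x3) (mkV y1 y2 y3) (mkV (d 0%nat) (d 1%nat) (d 2%nat))
      (mkV (d 3%nat) (d 4%nat) (d 5%nat))).
Proof.
  intros Hpos p d. apply is_derive_Reals.
  apply (derV mu k1 k2 L0 A0 (fun j t => upd p i t j) d (p i)); try (rewrite upd_same; reflexivity); auto.
  intro j. unfold d, upd. destruct (Nat.eqb j i).
  - exact (@is_derive_id R_AbsRing (p i)).
  - exact (@is_derive_const R_AbsRing R_NormedModule (p j) (p i)).
Qed.

Lemma dot_e1 u : dot u (mkV 1 0 0) = v1 u. Proof. unfold dot; simpl; ring. Qed.
Lemma dot_e2 u : dot u (mkV 0 1 0) = v2 u. Proof. unfold dot; simpl; ring. Qed.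
Lemma dot_e3 u : dot u (mkV 0 0 1) = v3 u. Proof. unfold dot; simpl; ring. Qed.
Lemma dot_e0 u : dot u (mkV 0 0 0) = 0. Proof. unfold dot; simpl; ring. Qed.

Lemma dot_zero u : dot u u = 0 -> u = vzero.
Proof. destruct u as [a b c]; unfold dot, vzero; simpl; intro H. f_equal; nra. Qed.

Lemma grad_at_min mu k1 k2 L0 A0 x v dx dv :
  Lmom x v = L0 -> Alrl mu x v = A0 -> grad mu k1 k2 L0 A0 x v dx dv = 0.
Proof.
  intros HL HA. unfold grad. cbv zeta. rewrite HL, HA.
  generalize (mu / vnorm x) (mu / (vnorm x * vnorm x * vnorm x)). intros m1 m3.
  vring.
Qed.

Lemma lam0 k1 k2 L A L0 A0 l : 0 < k1 -> 0 < k2 -> dot L A = 0 -> dot L0 A0 = 0 ->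
  L <> vzero -> vscale k1 (vsub L L0) = vscale l A -> vscale k2 (vsub A A0) = vscale l L -> l = 0.
Proof.
  intros Hk1 Hk2 HLA H0 HL Ha Hb. apply vzero_dot in HL.
  destruct L as [L1 L2 L3], A as [A1 A2 A3], L0 as [P1 P2 P3], A0 as [Q1 Q2 Q3].
  unfold vscale, vsub, dot in *; simpl in *.
  injection Ha; intros a3 a2 a1. injection Hb; intros b3 b2 b1.
  assert (e1 : k1 * P1 = k1 * L1 - l * A1) by lra.
  assert (e2 : k1 * P2 = k1 * L2 - l * A2) by lra.
  assert (e3 : k1 * P3 = k1 * L3 - l * A3) by lra.
  assert (f1 : k2 * Q1 = k2 * A1 - l * L1) by lra.
  assert (f2 : k2 * Q2 = k2 * A2 - l * L2) by lra.
  assert (f3 : k2 * Q3 = k2 * A3 - l * L3) by lra.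
  assert (K : k1 * k2 * (P1 * Q1 + P2 * Q2 + P3 * Q3) =
     (k1*P1)*(k2*Q1) + (k1*P2)*(k2*Q2) + (k1*P3)*(k2*Q3)) by ring.
  rewrite H0, e1, e2, e3, f1, f2, f3 in K.
  assert (K2 : l * (k1 * (L1*L1+L2*L2+L3*L3) + k2 * (A1*A1+A2*A2+A3*A3)) = 0).
  { replace (l * (k1 * (L1*L1+L2*L2+L3*L3) + k2 * (A1*A1+A2*A2+A3*A3))) with
      ((k1*k2 + l*l) * (L1*A1+L2*A2+L3*A3) - ((k1 * L1 - l * A1) * (k2 * A1 - l * L1) +
       (k1 * L2 - l * A2) * (k2 * A2 - l * L2) + (k1 * L3 - l * A3) * (k2 * A3 - l * L3))) by ring.
    rewrite HLA, <- K. ring. }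
  apply Rmult_integral in K2. destruct K2 as [K2|K2]; auto.
  assert (0 <= A1*A1+A2*A2+A3*A3) by nra.
  assert (0 < k1 * (L1 * L1 + L2 * L2 + L3 * L3)) by (apply Rmult_lt_0_compat; lra).
  assert (0 <= k2 * (A1*A1+A2*A2+A3*A3)) by (apply Rmult_le_pos; lra).
  lra.
Qed.

Lemma dot_LA mu x v : dot (Lmom x v) (Alrl mu x v) = 0.
Proof. unfold Alrl, Lmom. generalize (mu / vnorm x). intro m. vring. Qed.

Theorem lemma7 (mu k1 k2 : R) (L0 A0 : vec3) (c : R) :
  0 < mu -> 0 < k1 -> 0 < k2 ->
  dot L0 A0 = 0 -> L0 <> vzero -> vnorm A0 < mu ->
  0 < c ->
  c < Rmin (k1 * (vnorm L0) ^ 2 / 2) (k2 * (mu - vnorm A0) ^ 2 / 2) ->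
  forall x v : vec3, x <> vzero ->
    ((critical_point (Vfun mu k1 k2 L0 A0) x v /\
      0 <= Vfun mu k1 k2 L0 A0 x v <= c)
     <-> Vfun mu k1 k2 L0 A0 x v = 0)
    /\ (Vfun mu k1 k2 L0 A0 x v = 0 <-> (Lmom x v = L0 /\ Alrl mu x v = A0)).
Proof.
  intros Hmu Hk1 Hk2 HLA HL0 HA0 Hc Hcm x v Hx.
  assert (Part2 : Vfun mu k1 k2 L0 A0 x v = 0 <-> (Lmom x v = L0 /\ Alrl mu x v = A0)).
  { rewrite Vfun_alt. pose proof (dot_nonneg (vsub (Lmom x v) L0)).
    pose proof (dot_nonneg (vsub (Alrl mu x v) A0)). split.
    - intro HVz. split; apply vsub_zero, dot_zero; nra.
    - intros [H1 H2]. rewrite H1, H2.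
      replace (dot (vsub L0 L0) (vsub L0 L0)) with 0 by vring.
      replace (dot (vsub A0 A0) (vsub A0 A0)) with 0 by vring. ring. }
  split; [|exact Part2].
  pose proof (vzero_dot _ Hx) as Hxx.
  destruct x as [x1 x2 x3], v as [y1 y2 y3].
  assert (Hpos : 0 < x1*x1+x2*x2+x3*x3) by (unfold dot in Hxx; simpl in Hxx; lra).
  split.
  - intros [Hcr [HV0 HVc]].
    pose proof (fun i Hi => uniqueness_limite _ _ _ _ (Hcr i Hi) (crit_deriv mu k1 k2 L0 A0 x1 x2 x3 y1 y2 y3 i Hpos)) as G.
    pose proof (G 0%nat ltac:(lia)) as G0. pose proof (G 1%nat ltac:(lia)) as G1.
    pose proof (G 2%nat ltac:(lia)) as G2. pose proof (G 3%nat ltac:(lia)) as G3.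
    pose proof (G 4%nat ltac:(lia)) as G4. pose proof (G 5%nat ltac:(lia)) as G5.
    clear G.
    cbv beta iota delta [Nat.eqb] in G0, G1, G2, G3, G4, G5.
    unfold grad in G0, G1, G2, G3, G4, G5. cbv zeta in G0, G1, G2, G3, G4, G5.
    set (X := mkV x1 x2 x3) in *. set (Y := mkV y1 y2 y3) in *.
    set (r := vnorm X) in *.
    set (a := vscale k1 (vsub (Lmom X Y) L0)) in *.
    set (b := vscale k2 (vsub (Alrl mu X Y) A0)) in *.
    rewrite dot_e1, dot_e0 in G0. rewrite dot_e2, dot_e0 in G1. rewrite dot_e3, dot_e0 in G2.
    rewrite dot_e1, dot_e0 in G3. rewrite dot_e2, dot_e0 in G4. rewrite dot_e3, dot_e0 in G5.
    assert (HE1 : E1 X Y a b = vzero).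
    { revert G3 G4 G5. destruct (E1 X Y a b); unfold vzero; simpl; intros; f_equal; lra. }
    assert (HE2 : E2 X Y a b (mu / r) (mu / (r * r * r)) = vzero).
    { revert G0 G1 G2. destruct (E2 X Y a b (mu / r) (mu / (r * r * r))); unfold vzero; simpl; intros; f_equal; lra. }
    assert (Hr : 0 < r) by (apply sqrt_lt_R0; exact Hxx).
    assert (Hr2 : r * r = dot X X) by (apply sqrt_sqrt; lra).
    assert (Hm : mu / r = mu / (r * r * r) * dot X X) by (rewrite <- Hr2; field; lra).
    assert (Hm3 : mu / (r * r * r) <> 0).
    { apply Rgt_not_eq. unfold Rdiv. apply Rmult_lt_0_compat; auto.
      apply Rinv_0_lt_compat. repeat apply Rmult_lt_0_compat; auto. }
    assert (HXne : X <> vzero) by exact Hx.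
    assert (HLne : cross X Y <> vzero).
    { intro HL. rewrite Vfun_alt in HVc. change (cross X Y) with (Lmom X Y) in HL. rewrite HL in HVc.
      replace (dot (vsub vzero L0) (vsub vzero L0)) with (dot L0 L0) in HVc by vring.
      pose proof (dot_nonneg (vsub (Alrl mu X Y) A0)).
      pose proof (Rmin_l (k1 * vnorm L0 ^ 2 / 2) (k2 * (mu - vnorm A0) ^ 2 / 2)).
      unfold vnorm in H0. rewrite pow2_sqrt in H0 by apply dot_nonneg.
      unfold vnorm in Hcm. rewrite pow2_sqrt in Hcm by apply dot_nonneg.
      assert (0 <= k2 / 2 * dot (vsub (Alrl mu X Y) A0) (vsub (Alrl mu X Y) A0)) by (apply Rmult_le_pos; lra).
      lra. }
    destruct (alg X Y a b (mu / r) (mu / (r * r * r)) Hm Hm3 HXne HLne HE1 HE2) as [l [Hb Ha]].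
    assert (Hl : l = 0).
    { apply (lam0 k1 k2 (Lmom X Y) (Alrl mu X Y) L0 A0 l); auto.
      apply dot_LA. }
    subst l. apply Part2.
    assert (Ha0 : vsub (Lmom X Y) L0 = vzero).
    { apply scale_zero_r with k1; [|lra]. unfold a in Ha. rewrite Ha. vring. }
    assert (Hb0 : vsub (Alrl mu X Y) A0 = vzero).
    { apply scale_zero_r with k2; [|lra]. unfold b in Hb. rewrite Hb. vring. }
    split; apply vsub_zero; assumption.
  - intro HV. pose proof HV as HV'. apply Part2 in HV' as [HL HA].
    split; [|rewrite HV; lra].
    intros i Hi.
    pose proof (crit_deriv mu k1 k2 L0 A0 x1 x2 x3 y1 y2 y3 i Hpos) as D.
    cbv zeta in D. rewrite grad_at_min in D by assumption. exact D.
Qed.
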